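(* For every $m\ge 1$, $$\mathscr{T}_m=\left\{\tau_1^{\epsilon_1}\circ\tau_2^{\epsilon_2}\circ\cdots\circ\tau_m^{\epsilon_m}\ \middle|\ \epsilon_1,\ldots,\epsilon_m\in\{1,2\}\right\}.$$ (Since $\tau_i^2$ is the identity, this is the set of all products $\tau_{i_1}\circ\cdots\circ\tau_{i_k}$ with $i_1<\cdots<i_k$, including the empty product.)
   Context: $\mathcal{S}_m$ is the group of bijections of $I_m=\{1,\ldots,m\}$, with $\sigma\circ\tau$ meaning apply $\tau$ first, then $\sigma$. $\mathscr{T}_m=\{\sigma\in\mathcal{S}_m \mid \exists t\in I_m:\ \sigma(1)>\sigma(2)>\cdots>\sigma(t)=1,\ \sigma(t)<\sigma(t+1)<\cdots<\sigma(m)\}$. For $i\in I_m$, $\tau_i\in\mathcal{S}_m$ is defined by $\tau_i(j)=i+1-j$ for $1\le j\le i$ and $\tau_i(j)=j$ for $j>i$. *)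

(* Defs.v *)
From mathcomp Require Import all_boot all_fingroup.
From Stdlib Require Import Lia.
Set Implicit Arguments. Unset Strict Implicit. Unset Printing Implicit Defensive.

(* Conventions: I_m = {1,...,m} is represented by 'I_m = {0,...,m-1} via
   k <-> k+1.  S_m is {perm 'I_m}.  Paper composition (sigma o tau)
   "apply tau first" is mathcomp's (tau * sigma)%g. *)

Local Open Scope group_scope.

Definition compp m (s t : {perm 'I_m}) : {perm 'I_m} := t * s.

Definition in_Tm m (s : {perm 'I_m}) : Prop :=
  exists t : 'I_m,
    val (s t) = 0%N /\
    (forall i j : 'I_m, (i < j)%N -> (j <= t)%N -> (val (s j) < val (s i))%N) /\
    (forall i j : 'I_m, (t <= i)%N -> (i < j)%N -> (val (s i) < val (s j))%N).

(* tau_i for i in {1..m} (given as a nat): tau_i(j) = i+1-j for j <= i,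
   j otherwise; 0-based: j |-> i-1-j for j < i, j otherwise. *)
Definition tau_fun m (i : nat) (j : 'I_m) : 'I_m :=
  if (j < i)%N then insubd j (i.-1 - j) else j.

Lemma tau_fun_inj m (i : nat) : (i <= m)%N -> injective (@tau_fun m i).
Proof.
move=> im j k; rewrite /tau_fun.
have H : forall x : 'I_m, (x < i)%N -> val (insubd x (i.-1 - x) : 'I_m) = i.-1 - x.
  move=> x xi; rewrite val_insubd; case: ifP => // /negP; case.
  have := ltn_ord x; move: xi im => /ltP xi /leP im /ltP xm; apply/ltP.
  rewrite -subn1 -!minusE; lia.
have xx := ltn_ord j; have yy := ltn_ord k.
case: (ltnP j i) => ji; case: (ltnP k i) => ki => e; apply: val_inj;
  move: (congr1 val e); rewrite ?H //;
  move: ji ki xx yy im; rewrite -?subn1 -?minusE /=;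
  case: j e => j /= ? e; case: k e => k /= ? e;
  move=> /leP ? /leP ? /leP ? /leP ? /leP ? ?; lia.
Qed.

(* tau_i as a permutation, for 1 <= i <= m (i : 'I_m represents i+1). *)
Definition tau m (i : 'I_m) : {perm 'I_m} :=
  perm (@tau_fun_inj m i.+1 (ltn_ord i)).

(* tau_1^{e_1} o tau_2^{e_2} o ... o tau_m^{e_m}, with e : 'I_m -> 'I_2
   and exponent (e i).+1 in {1,2}. *)
Definition tau_prod m (e : 'I_m -> 'I_2) : {perm 'I_m} :=
  foldr (fun i acc => compp ((tau i) ^+ (e i).+1) acc) 1 (enum 'I_m).

(* Main.v *)
Require Import Defs.
From mathcomp Require Import all_boot all_fingroup.
From mathcomp Require Import zify.
From Stdlib Require Import Lia.
Set Implicit Arguments. Unset Strict Implicit. Unset Printing Implicit Defensive.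

Section S.
Variable n : nat.
Local Notation N := n.+1.

Definition Tk (k : nat) : {perm 'I_N} := tau (inord k).

Lemma tauE (k : nat) (j : 'I_N) : k < N ->
  nat_of_ord (Tk k j) = if j <= k then k - j else j.
Proof.
move=> kN; rewrite /Tk /tau permE /tau_fun inordK //=.
rewrite ltnS; case: ifP => // jk; rewrite val_insubd.
have := ltn_ord j; case: ifP => //; lia.
Qed.

Lemma Tk_inv k : k < N -> (Tk k * Tk k = 1)%g.
Proof.
move=> kN; apply/permP => j; apply: val_inj => /=.
rewrite permM perm1 tauE // tauE //; case: ifP; case: ifP; lia.
Qed.

Definition stepT (e : 'I_N -> 'I_2) (kk : nat) : {perm 'I_N} := (Tk kk ^+ (e (inord kk)).+1)%g.
Fixpoint pre (e : 'I_N -> 'I_2) k : {perm 'I_N} :=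
  if k is kk.+1 then (stepT e kk * pre e kk)%g else (1%g : {perm 'I_N}).

Lemma foldr_gen (e : 'I_N -> 'I_2) a (r : seq 'I_N) :
  foldr (fun i acc => compp ((tau i) ^+ (e i).+1) acc) a r =
  (a * foldr (fun i acc => compp ((tau i) ^+ (e i).+1) acc) 1 r)%g.
Proof.
elim: r => [|x r IH] /=; first by rewrite mulg1.
by rewrite /compp IH mulgA.
Qed.

Lemma tau_prod_pre e : tau_prod e = pre e N.
Proof.
have: forall k, k <= N ->
  foldr (fun i acc => compp ((tau i) ^+ (e i).+1) acc) 1%g (take k (enum 'I_N)) = pre e k.
  elim=> [|k IH] kN; first by rewrite take0.
  rewrite (take_nth ord0) ?size_enum_ord // foldr_rcons foldr_gen IH; last lia.
  have -> : nth ord0 (enum 'I_N) k = inord k.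
    by apply: val_inj => /=; rewrite nth_enum_ord // inordK.
  by rewrite /= /compp mul1g.
have E : take N (enum (ordinal N)) = enum (ordinal N) by rewrite take_oversize // size_enum_ord.
by move/(_ N (leqnn _)); rewrite E => <-.
Qed.

Lemma pre_ext e e' k : k <= N -> (forall i : 'I_N, i < k -> e i = e' i) ->
  pre e k = pre e' k.
Proof.
elim: k => [//|k IH] kN H /=.
rewrite IH; [|lia|move=> i ik; apply: H; lia].
by rewrite /stepT H // inordK.
Qed.

Definition VK (k : nat) (s : {perm 'I_N}) : Prop :=
 (forall j : 'I_N, k <= j -> s j = j) /\
 exists t : 'I_N, nat_of_ord (s t) = 0 /\
   (forall i j : 'I_N, i < j -> j <= t -> s j < s i) /\
   (forall i j : 'I_N, t <= i -> i < j -> j < k -> s i < s j).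

Lemma vk_small k (s : {perm 'I_N}) : (forall j : 'I_N, k <= j -> s j = j) ->
  forall i : 'I_N, i < k -> s i < k.
Proof.
move=> fx i ik; rewrite ltnNge; apply/negP => ks.
have := fx _ ks; rewrite -{1}[s i]/(s i) => h.
have := perm_inj (esym h) => ei; move: ik; rewrite ei; lia.
Qed.

Lemma L1 k s : k < N -> VK k s -> VK k.+1 s.
Proof.
move=> kN [fx [t [t0 [dec inc]]]]; split.
  move=> j kj; apply: fx; lia.
exists t; do !split=> //.
move=> i j ti ij jk; case: (ltnP j k) => jk'; first by apply: inc.
have jk2 : nat_of_ord j = k by lia.
rewrite (fx j) ?jk2; last lia.
apply: vk_small fx _ _; lia.
Qed.

Lemma L2 k s : k < N -> VK k.+1 s -> VK k.+1 (Tk k * s)%g.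
Proof.
move=> kN [fx [t [t0 [dec inc]]]].
have tk : t <= k.
  case: (leqP t k) => // kt; have := fx t kt; move/(congr1 (@nat_of_ord N)); lia.
split.
  move=> j kj; rewrite permM; have -> : Tk k j = j.
    by apply: val_inj => /=; rewrite tauE // ifN //; lia.
  exact: fx.
exists (inord (k - t)).
have Ht : Tk k (inord (k - t)) = t.
  by apply: val_inj => /=; rewrite tauE // inordK ?ifT; lia.
rewrite permM Ht; split=> //; split.
  move=> i j ij; rewrite inordK; last lia.
  move=> jt; rewrite !permM; apply: inc; rewrite ?tauE //; do !case: ifP; lia.
move=> i j; rewrite inordK; last lia.
move=> ti ij jk; rewrite !permM; apply: dec; rewrite ?tauE //; do !case: ifP; lia.
Qed.

Lemma L3 k s : k < N -> VK k.+1 s -> s (inord k) = inord k -> VK k s.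
Proof.
move=> kN [fx [t [t0 [dec inc]]]] sk; split.
  move=> j kj; case: (eqVneq (nat_of_ord j) k) => jk.
    by have -> : j = inord k by apply: val_inj => /=; rewrite inordK.
  apply: fx; lia.
exists t; do !split=> //.
move=> i j ti ij jk; apply: inc => //; lia.
Qed.

Lemma L4 k s : k < N -> VK k.+1 s -> s (inord k) != inord k -> nat_of_ord (s ord0) = k.
Proof.
move=> kN [fx [t [t0 [dec inc]]]] sk.
set p := (s^-1)%g (inord k).
have sp : s p = inord k by rewrite /p permKV.
have vsp : nat_of_ord (s p) = k by rewrite sp inordK.
have pk : p < k.
  case: (ltnP p k) => // kp; case: (eqVneq (nat_of_ord p) k) => pk.
    have : p = inord k by apply: val_inj => /=; rewrite inordK.
    by move=> pe; move: sk; rewrite -pe sp -pe eqxx.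
  have := fx p (ltac:(lia)); rewrite sp => /(congr1 (@nat_of_ord N)); rewrite inordK //; lia.
case: (eqVneq (nat_of_ord p) 0) => p0.
  by have <- : p = ord0 by apply: val_inj.
case: (leqP p t) => pt.
  have := dec ord0 p (ltac:(simpl; lia)) pt.
  have := vk_small fx (ltac:(simpl; lia) : (ord0 : 'I_N) < k.+1); lia.
have := inc p (inord k) (ltac:(lia)) (ltac:(rewrite inordK; lia)) (ltac:(rewrite inordK; lia)).
have := vk_small fx (ltac:(rewrite inordK; lia) : (inord k : 'I_N) < k.+1); lia.
Qed.

Lemma fwd k e : k <= N -> VK k (pre e k).
Proof.
elim: k => [|k IH] kN.
  split; first by move=> j _; rewrite perm1.
  exists ord0; split; first by rewrite perm1.
  by split=> i j; rewrite ?perm1 /=; lia.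
have h := L1 kN (IH (ltnW kN)).
rewrite /= /stepT; case: (e (inord k)) => -[|[|b]] hb //=.
  by rewrite expg1; apply: L2.
by rewrite expgS expg1 Tk_inv // mul1g.
Qed.

Lemma bwd k s : k <= N -> VK k s -> exists e, s = pre e k.
Proof.
elim: k s => [|k IH] s kN vk.
  exists (fun _ => ord0); case: vk => fx _; apply/permP => j; rewrite perm1 fx //.
case: (eqVneq (s (inord k)) (inord k)) => sk.
  have [e ->] := IH s (ltnW kN) (L3 kN vk sk).
  exists (fun i => if nat_of_ord i == k then (ord_max : 'I_2) else e i).
  rewrite /= /stepT inordK // eqxx expgS expg1 Tk_inv // mul1g.
  apply: pre_ext; first exact: ltnW.
  move=> i ik; have -> : (nat_of_ord i == k) = false by apply/eqP; lia.
  done.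
set s' := (Tk k * s)%g.
have v' := L2 kN vk.
have s'k : s' (inord k) = inord k.
  apply: val_inj => /=; rewrite permM.
  have -> : Tk k (inord k) = ord0.
    by apply: val_inj => /=; rewrite tauE // inordK // leqnn subnn.
  rewrite inordK //; exact: L4 kN vk sk.
have [e he] := IH s' (ltnW kN) (L3 kN v' s'k).
exists (fun i => if nat_of_ord i == k then ord0 else e i).
rewrite /= /stepT inordK // eqxx expg1.
rewrite (@pre_ext _ e); first last.
- move=> i ik; have -> : (nat_of_ord i == k) = false by apply/eqP; lia.
  done.
- exact: ltnW.
by rewrite -he /s' mulgA Tk_inv // mul1g.
Qed.

End S.

Theorem mainTheorem7 (m : nat) (hm : (1 <= m)%N) (s : {perm 'I_m}) :
  in_Tm s <-> exists e : 'I_m -> 'I_2, s = tau_prod e.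
Proof.
case: m hm s => [//|n] _ s; split.
  move=> [t [t0 [dec inc]]].
  have vk : VK n.+1 s.
    split; first by move=> j; have := ltn_ord j; lia.
    exists t; do !split => //.
    move=> i j ti ij _; exact: inc.
  have [e ->] := @bwd n n.+1 s (leqnn _) vk.
  by exists e; rewrite tau_prod_pre.
move=> [e ->]; rewrite tau_prod_pre.
have [_ [t [t0 [dec inc]]]] := @fwd n n.+1 e (leqnn _).
exists t; do !split => //.
move=> i j ti ij; apply: inc => //.
Qed.
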